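(* Let $q>1$. For every integer $N\ge1$ and real $x\neq0$, $$H_{N+1}(x;q)=\frac{[N+1]_q}{N+1}\Big([2]_q x-\Big(\frac{2}{[2]_q}+(q-1)x^2\Big)D_x+\sum_{l=2}^{N}\frac{(1-q^2)^l x^{l+1}}{[2]_q^{\,l-1}[l+1]_q}D_x^{\,l}\Big)H_N(x;q),$$ where $D_x^l$ denotes the $l$-fold iterate of $D_x$ and the sum is empty for $N=1$.
   Context: For $n\ge 0$ let $[n]_q=\frac{q^n-1}{q-1}$, $[0]_q!=1$, $[n]_q!=[1]_q\cdots[n]_q$, and $e_q(z)=\sum_{n\ge0}z^n/[n]_q!$. The $q$-derivative is $D_xf(x)=\frac{f(qx)-f(x)}{(q-1)x}$. The $q$-Hermite polynomials $H_N(x;q)$ are defined by the identity of formal power series in $t$: $e^{-t^2}e_q([2]_q t x)=\sum_{N\ge0}H_N(x;q)\,t^N/[N]_q!$. *)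

(* Defs.v *)
From HB Require Import structures.
From mathcomp Require Import all_boot all_order all_algebra.
Set Implicit Arguments. Unset Strict Implicit. Unset Printing Implicit Defensive.
Import Order.TTheory GRing.Theory Num.Theory.
Local Open Scope ring_scope.

Definition qint (R : realFieldType) (q : R) (n : nat) : R := (q ^+ n - 1) / (q - 1).

Definition qfact (R : realFieldType) (q : R) (n : nat) : R :=
  \prod_(i < n) qint q i.+1.

Definition Dq (R : realFieldType) (q : R) (f : R -> R) : R -> R :=
  fun x => (f (q * x) - f x) / ((q - 1) * x).

(* coefficient of t^n in e^{-t^2} = sum_k (-1)^k t^{2k} / k! *)
Definition coef_exp_mt2 (R : realFieldType) (n : nat) : R :=
  if odd n then 0 else (-1) ^+ n./2 / (n./2)`!%:R.

(* coefficient of t^n in e_q(a t) = sum_n a^n t^n / [n]_q! *)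
Definition coef_eq (R : realFieldType) (q a : R) (n : nat) : R :=
  a ^+ n / qfact q n.

(* H_N(x;q) : [N]_q! times the coefficient of t^N in the (Cauchy) product
   e^{-t^2} e_q([2]_q t x) of formal power series in t. *)
Definition qHermite (R : realFieldType) (q : R) (N : nat) (x : R) : R :=
  qfact q N * \sum_(k < N.+1) coef_exp_mt2 R k * coef_eq q (qint q 2 * x) (N - k).

(* Main.v *)
Require Import Defs.
From HB Require Import structures.
From mathcomp Require Import all_boot all_order all_algebra.
From mathcomp Require Import ring lra zify.
From Stdlib Require Import FunctionalExtensionality.
Import Order.TTheory GRing.Theory Num.Theory.
Set Implicit Arguments. Unset Strict Implicit.
Local Open Scope ring_scope.

Lemma q1_nz (R : realFieldType) (q : R) (hq : 1 < q) : q - 1 != 0.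
Proof. by rewrite subr_eq0 gt_eqF. Qed.

Lemma qpow_nz (R : realFieldType) (q : R) (hq : 1 < q) n : 1 - q ^+ n.+1 != 0.
Proof. by rewrite subr_eq0 lt_eqF // exprn_egt1. Qed.

Lemma qint_nz (R : realFieldType) (q : R) (hq : 1 < q) n : qint q n.+1 != 0.
Proof.
rewrite /qint mulf_neq0 //; last by rewrite invr_eq0 q1_nz.
by rewrite subr_eq0 gt_eqF // exprn_egt1.
Qed.

Lemma qint_sub (R : realFieldType) (q : R) (hq : 1 < q) n : (1 - q) * qint q n = 1 - q ^+ n.
Proof. rewrite /qint. have := q1_nz hq. move=> h. field. by []. Qed.

Lemma qint2 (R : realFieldType) (q : R) (hq : 1 < q) : qint q 2 = q + 1.
Proof. rewrite /qint. have h := q1_nz hq. field. by []. Qed.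

Lemma qfact_nz (R : realFieldType) (q : R) (hq : 1 < q) n : qfact q n != 0.
Proof. rewrite /qfact; apply/prodf_neq0 => i _; exact: qint_nz. Qed.

Lemma qfactS (R : realFieldType) (q : R) n : qfact q n.+1 = qfact q n * qint q n.+1.
Proof. by rewrite /qfact big_ord_recr. Qed.

Definition E (R : realFieldType) (q : R) (j l : nat) : R := \prod_(i < l) (1 - q ^+ (j - i)).
Definition ff (R : realFieldType) (q : R) (l j : nat) : R := \prod_(i < l) qint q (j - i).

Lemma E_recr (R : realFieldType) (q : R) n l : E q n l.+1 = E q n l * (1 - q ^+ (n - l)).
Proof. by rewrite /E big_ord_recr. Qed.

Lemma E_ff (R : realFieldType) (q : R) (hq : 1 < q) l j : (1 - q) ^+ l * ff q l j = E q j l.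
Proof.
elim: l => [|l IH]; first by rewrite /ff /E !big_ord0 mulr1.
rewrite E_recr -IH /ff big_ord_recr /= -qint_sub // exprS; ring.
Qed.


Lemma E_recl (R : realFieldType) (q : R) n l : E q n.+1 l.+1 = (1 - q ^+ n.+1) * E q n l.
Proof. by rewrite /E big_ord_recl subn0. Qed.

Lemma E_zero (R : realFieldType) (q : R) n l : (n < l)%N -> E q n l = 0.
Proof.
elim: l => [//|l IH] hl; rewrite E_recr.
case: (ltnP n l) => h; first by rewrite IH ?mul0r.
have -> : l = n by apply/eqP; rewrite eqn_leq h -ltnS hl.
by rewrite subnn expr0 subrr mulr0.
Qed.

Lemma E0 (R : realFieldType) (q : R) n : E q n 0 = 1.
Proof. by rewrite /E big_ord0. Qed.

Lemma E_tele (R : realFieldType) (q : R) n k :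
  \sum_(l < k) (E q n l - E q n l.+1) = 1 - E q n k.
Proof.
elim: k => [|k IH]; first by rewrite big_ord0 E0 subrr.
rewrite big_ord_recr /= IH; ring.
Qed.

Lemma V_lem (R : realFieldType) (q : R) (hq : 1 < q) n :
  \sum_(l < n) E q n l.+1 / (1 - q ^+ l.+1) = n%:R.
Proof.
elim: n => [|n IH]; first by rewrite big_ord0.
rewrite big_ord_recr /=.
have step : forall l : 'I_n, E q n.+1 l.+1 / (1 - q ^+ l.+1) =
    E q n l.+1 / (1 - q ^+ l.+1) + (E q n l - E q n l.+1).
  move=> l; have hl : (l <= n)%N by apply: ltnW.
  rewrite E_recl E_recr.
  have -> : q ^+ n.+1 = q ^+ (n - l) * q ^+ l.+1 by rewrite -exprD addnS subnK.
  have hz := qpow_nz hq l. field. by [].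
rewrite (eq_bigr _ (fun l _ => step l)) big_split /= IH E_tele E_recl.
have hz := qpow_nz hq n. rewrite -natr1. field. by [].
Qed.

Lemma trunc_sum (R : realFieldType) (F : nat -> R) j M :
  (j <= M)%N -> (forall l, (j < l)%N -> F l = 0) ->
  \sum_(l < M.+1) F l = \sum_(l < j.+1) F l.
Proof.
move=> hjM hF; rewrite (@big_ord_widen _ 0 +%R j.+1 M.+1 F) // [RHS]big_mkcond /=.
apply: eq_bigr => l _; case: ifP => // /negbT; rewrite -leqNgt => h.
by rewrite hF.
Qed.

Lemma W_lem (R : realFieldType) (q : R) (hq : 1 < q) j M : (j <= M)%N ->
  \sum_(l < M.+1) E q j l / (1 - q ^+ l.+1) = j.+1%:R / (1 - q ^+ j.+1).
Proof.
move=> hjM; rewrite (@trunc_sum _ (fun l => E q j l / (1 - q ^+ l.+1)) j M) //; last first.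
  by move=> l hl; rewrite E_zero ?mul0r.
rewrite -(V_lem hq j.+1) mulr_suml; apply: eq_bigr => l _.
rewrite E_recl. have h1 := qpow_nz hq j. have h2 := qpow_nz hq l. field. by rewrite h1 h2.
Qed.

Lemma S_lem (R : realFieldType) (q : R) (hq : 1 < q) j N : (1 <= N)%N -> (j <= N)%N ->
  qint q 2 - (q - 1) * ff q 1 j
  + \sum_(2 <= l < N.+1) (1 - q ^+ 2) ^+ l / (qint q 2 ^+ l.-1 * qint q l.+1) * ff q l j
  = qint q 2 * j.+1%:R / qint q j.+1.
Proof.
move=> hN hjN.
have ha : qint q 2 != 0 := qint_nz hq 1.
have hq1 := q1_nz hq.
have T : forall l, (2 <= l < N.+1)%N ->
    (1 - q ^+ 2) ^+ l / (qint q 2 ^+ l.-1 * qint q l.+1) * ff q l j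
    = qint q 2 * (1 - q) * (E q j l / (1 - q ^+ l.+1)).
  move=> [|k] // _.
  rewrite -E_ff // -(qint_sub hq 2) -(qint_sub hq k.+2) /= exprMn exprS.
  have hk : qint q 2 ^+ k != 0 by rewrite expf_neq0.
  have hk2 := qint_nz hq k.+1.
  have hk3 : (1 - q) != 0 by rewrite -opprB oppr_eq0.
  rewrite [qint q 2 ^+ k.+1]exprS. field. by rewrite ?hk ?hk2 ?hk3 ?ha.
rewrite (eq_big_nat _ _ T) -mulr_sumr.
have := W_lem hq hjN.
move=> hW; rewrite -(big_mkord (fun _ => true) (fun l => E q j l / (1 - q ^+ l.+1))) big_ltn // big_ltn ?ltnS // in hW.
have e1 : qint q 2 - (q - 1) * ff q 1 j =
   qint q 2 * (1 - q) * (E q j 0 / (1 - q ^+ 1) + E q j 1 / (1 - q ^+ 2)).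
  rewrite E0 -E_ff // -(qint_sub hq 2) /= expr1.
  have hk3 : (1 - q) != 0 by rewrite -opprB oppr_eq0.
  field. by rewrite ?hk3 ?ha.
rewrite e1 -mulrDr -addrA hW -(qint_sub hq j.+1).
have hk3 : (1 - q) != 0 by rewrite -opprB oppr_eq0.
have hj := qint_nz hq j.
field. by rewrite ?hk3 ?hj.
Qed.

Lemma ff_zero (R : realFieldType) (q : R) (hq : 1 < q) l j : (j < l)%N -> ff q l j = 0.
Proof.
move=> h; have := E_ff hq l j; rewrite E_zero // => /eqP.
rewrite mulf_eq0 expf_eq0 => /orP [/andP [_ /eqP h1]|/eqP //].
by move: (q1_nz hq); rewrite -opprB h1 oppr0 eqxx.
Qed.

Lemma iterD (R : realFieldType) (q : R) (hq : 1 < q) (h : nat -> R) M l y : y != 0 ->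
  iter l (Dq q) (fun z => \sum_(j < M) h j * z ^+ j) y
  = \sum_(j < M) h j * ff q l j * y ^+ j / y ^+ l.
Proof.
elim: l y => [|l IH] y hy.
  by apply: eq_bigr => j _; rewrite /ff big_ord0 expr0 mulr1 divr1.
have hqy : q * y != 0 by rewrite mulf_neq0 // gt_eqF // (lt_trans ltr01 hq).
rewrite iterS /Dq IH // IH // -sumrB mulr_suml; apply: eq_bigr => j _.
have [hlj|hjl] := leqP l j; last first.
  by rewrite /ff big_ord_recr /= -/(ff q l j) (ff_zero hq hjl) !(mulr0, mul0r) subrr mul0r.
rewrite /ff big_ord_recr /= -/(ff q l j).
have hq1 := q1_nz hq.
have hql : q ^+ l != 0 by rewrite expf_neq0 // gt_eqF // (lt_trans ltr01 hq).
have hyl : y ^+ l != 0 by rewrite expf_neq0.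
move: (h j) (ff q l j) => a b.
rewrite -(subnK hlj) addnK /qint !exprD !exprMn exprS.
field. by rewrite ?hq1 ?hql ?hyl ?hy.
Qed.

Definition hc (R : realFieldType) (q : R) (N j : nat) : R :=
  if (j <= N)%N then qfact q N * coef_exp_mt2 R (N - j) * qint q 2 ^+ j / qfact q j else 0.

Lemma HP (R : realFieldType) (q : R) N y :
  qHermite q N y = \sum_(j < N.+1) hc q N j * y ^+ j.
Proof.
rewrite /qHermite mulr_sumr (reindex_inj rev_ord_inj) /=.
apply: eq_bigr => i _; have hi : (i <= N)%N by rewrite -ltnS ltn_ord.
rewrite /hc hi subSS subKn //.
rewrite /coef_eq exprMn; ring.
Qed.

Lemma HF (R : realFieldType) (q : R) N :
  qHermite q N = fun y => \sum_(j < N.+1) hc q N j * y ^+ j.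
Proof. by apply: functional_extensionality => y; exact: HP. Qed.

Lemma inner (R : realFieldType) (q : R) (hq : 1 < q) (N : nat)
  (hN : (1 <= N)%N) (x : R) (hx : x != 0) :
      qint q 2 * x * qHermite q N x
      - (2 / qint q 2 + (q - 1) * x ^+ 2) * Dq q (qHermite q N) x
      + \sum_(2 <= l < N.+1)
          ((1 - q ^+ 2) ^+ l * x ^+ l.+1) / (qint q 2 ^+ l.-1 * qint q l.+1)
            * iter l (Dq q) (qHermite q N) x
  = \sum_(j < N.+1) hc q N j * (qint q 2 * j.+1%:R / qint q j.+1) * x ^+ j.+1
    - 2 / qint q 2 * \sum_(j < N.+1) hc q N j * qint q j * x ^+ j / x.
Proof.
have ha : qint q 2 != 0 := qint_nz hq 1.
change (Dq q (qHermite q N) x) with (iter 1 (Dq q) (qHermite q N) x).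
rewrite (HP q N x) HF (iterD hq _ _ _ hx).
have e1 : qint q 2 * x * \sum_(j < N.+1) hc q N j * x ^+ j
    = \sum_(j < N.+1) hc q N j * x ^+ j.+1 * qint q 2.
  by rewrite mulr_sumr; apply: eq_bigr => j _; rewrite exprS; ring.
have e3 : (2 / qint q 2 + (q - 1) * x ^+ 2) *
      \sum_(j < N.+1) hc q N j * ff q 1 j * x ^+ j / x ^+ 1
    = 2 / qint q 2 * \sum_(j < N.+1) hc q N j * qint q j * x ^+ j / x
      + \sum_(j < N.+1) hc q N j * x ^+ j.+1 * ((q - 1) * ff q 1 j).
  rewrite mulrDl; congr (_ + _).
    by congr (_ * _); apply: eq_bigr => j _; rewrite /ff big_ord1 subn0 expr1.
  rewrite mulr_sumr; apply: eq_bigr => j _; rewrite exprS expr1.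
  rewrite [x ^+ j.+1]exprS. field. by rewrite ?hx.
have e2 : \sum_(2 <= l < N.+1)
          ((1 - q ^+ 2) ^+ l * x ^+ l.+1) / (qint q 2 ^+ l.-1 * qint q l.+1)
            * iter l (Dq q) (fun y => \sum_(j < N.+1) hc q N j * y ^+ j) x
    = \sum_(j < N.+1) hc q N j * x ^+ j.+1 * \sum_(2 <= l < N.+1)
          (1 - q ^+ 2) ^+ l / (qint q 2 ^+ l.-1 * qint q l.+1) * ff q l j.
  rewrite (eq_big_nat _ _ (fun l _ => congr1 (fun t => _ * t) (iterD hq _ N.+1 l hx))).
  under eq_bigr do rewrite mulr_sumr.
  rewrite exchange_big /=; apply: eq_bigr => j _; rewrite mulr_sumr.
  apply: eq_bigr => l _.
  have hA : qint q 2 ^+ l.-1 * qint q l.+1 != 0 by rewrite mulf_neq0 ?expf_neq0 ?qint_nz.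
  have hxl : x ^+ l != 0 by rewrite expf_neq0.
  rewrite !exprS. field. by apply/and3P; split => //; [exact: qint_nz | exact: expf_neq0].
rewrite e1 e2 e3.
have key : \sum_(j < N.+1) hc q N j * (qint q 2 * j.+1%:R / qint q j.+1) * x ^+ j.+1
  = \sum_(j < N.+1) hc q N j * x ^+ j.+1 * qint q 2
    - \sum_(j < N.+1) hc q N j * x ^+ j.+1 * ((q - 1) * ff q 1 j)
    + \sum_(j < N.+1) hc q N j * x ^+ j.+1 * \sum_(2 <= l < N.+1)
          (1 - q ^+ 2) ^+ l / (qint q 2 ^+ l.-1 * qint q l.+1) * ff q l j.
  rewrite -sumrB -big_split /=; apply: eq_bigr => j _.
  rewrite -(S_lem hq hN (_ : (j <= N)%N)); last by rewrite -ltnS ltn_ord.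
  ring.
rewrite key; ring.
Qed.

Lemma cm (R : realFieldType) m :
  coef_exp_mt2 R m = - (m.+2)%:R / 2 * coef_exp_mt2 R m.+2.
Proof.
rewrite /coef_exp_mt2 /= negbK.
case: (boolP (odd m)) => ho; first by rewrite mulr0.
have hm : m = (m./2).*2 by rewrite -[LHS]odd_double_half (negbTE ho).
move: (m./2) hm => k -> /=.
rewrite factS natrM exprS -muln2.
have h2 : (2 : R) != 0 by rewrite pnatr_eq0.
have hk : (k.+1)%:R != 0 :> R by rewrite pnatr_eq0.
have hf : (k`!)%:R != 0 :> R by rewrite pnatr_eq0 -lt0n fact_gt0.
have -> : (k * 2).+2 = (k.+1 * 2)%N by rewrite mulSn add2n.
rewrite natrM. field. by rewrite hf /= addrC natr1.
Qed.

Lemma C1 (R : realFieldType) (q : R) (hq : 1 < q) N j : (j <= N)%N ->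
  hc q N.+1 j.+1 = qint q N.+1 / N.+1%:R * (hc q N j * (qint q 2 * j.+1%:R / qint q j.+1))
                 - qint q N.+1 / N.+1%:R * (2 / qint q 2) * (hc q N j.+2 * qint q j.+2).
Proof.
move=> hj.
have ha : qint q 2 != 0 := qint_nz hq 1.
have hj1 := qint_nz hq j. have hj2 := qint_nz hq j.+1.
have hfj := qfact_nz hq j.
have hN : N.+1%:R != 0 :> R by rewrite pnatr_eq0.
have h2 : (2 : R) != 0 by rewrite pnatr_eq0.
have hN' : 1 + N%:R != 0 :> R by rewrite addrC natr1 pnatr_eq0.
rewrite /hc ltnS hj subSS !qfactS.
have [h|h] := leqP j.+2 N.
  have eN : (N - j = (N - j.+2).+2)%N by lia.
  have ej : j.+1%:R = N.+1%:R - (N - j.+2).+2%:R :> R.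
    by rewrite -natrB; [congr (_%:R); lia | lia].
  rewrite eN (@cm R (N - j.+2)%N) ej.
  move: (N - j.+2)%N => m. move: (coef_exp_mt2 R m.+2) => c. rewrite !exprS.
  field. by rewrite ?ha ?hj1 ?hj2 ?hfj ?hN' ?h2.

have [eN|eN] : N = j \/ N = j.+1 by lia.
  subst N. rewrite subnn !exprS. field. by rewrite ?ha ?hj1 ?hj2 ?hfj ?hN' ?h2.
subst N. rewrite -addn1 addKn /coef_exp_mt2 /=. rewrite !(mulr0, mul0r); ring.
Qed.

Lemma C0 (R : realFieldType) (q : R) (hq : 1 < q) n :
  hc q n.+2 0 = - (qint q n.+2 / n.+2%:R * (2 / qint q 2)) * (hc q n.+1 1 * qint q 1).
Proof.
have ha : qint q 2 != 0 := qint_nz hq 1.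
have hN : n.+2%:R != 0 :> R by rewrite pnatr_eq0.
have h2 : (2 : R) != 0 by rewrite pnatr_eq0.
have hf := qfact_nz hq n.+1.
have q1 : qint q 1 = 1 by rewrite /qint expr1 divff ?(q1_nz hq).
rewrite /hc /= subn0 subn1 /= (@cm R n) qfactS /qfact big_ord0 -/(qfact q 1).
rewrite /qfact big_ord1 -/(qfact q n.+1) q1 expr0 expr1.
move: (coef_exp_mt2 R n.+2) => c.
field. rewrite ha /=. have e : 2 + n%:R = n.+2%:R :> R by rewrite !mulrS; ring. by rewrite e.
Qed.

Lemma hc_zero (R : realFieldType) (q : R) N j : (N < j)%N -> hc q N j = 0.
Proof. by move=> h; rewrite /hc leqNgt h. Qed.

Lemma Bsh (R : realFieldType) (q : R) n (x : R) (hx : x != 0) :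
  \sum_(j < n.+2) hc q n.+1 j * qint q j * x ^+ j / x
  = hc q n.+1 1 * qint q 1 + \sum_(j < n.+2) hc q n.+1 j.+2 * qint q j.+2 * x ^+ j.+1.
Proof.
rewrite big_ord_recl /= {1}/qint expr0 subrr mul0r mulr0 !mul0r add0r.
rewrite big_ord_recl /= !big_ord_recr /= (@hc_zero _ q n.+1 n.+2) // (@hc_zero _ q n.+1 n.+3) // !mul0r !addr0 /bump /= !add1n.
rewrite expr1 mulfK //; congr (_ + _); apply: eq_bigr => j _.
rewrite !add1n exprS. field. by [].
Qed.

Unset Implicit Arguments.

Theorem mainTheorem5 (R : realFieldType) (q : R) (hq : 1 < q) (N : nat)
  (hN : (1 <= N)%N) (x : R) (hx : x != 0) :
  qHermite q N.+1 x =
  qint q N.+1 / N.+1%:R *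
    ( qint q 2 * x * qHermite q N x
      - (2 / qint q 2 + (q - 1) * x ^+ 2) * Dq q (qHermite q N) x
      + \sum_(2 <= l < N.+1)
          ((1 - q ^+ 2) ^+ l * x ^+ l.+1) / (qint q 2 ^+ l.-1 * qint q l.+1)
            * iter l (Dq q) (qHermite q N) x ).
Proof.
rewrite (inner hq hN hx) HP.
case: N hN => [//|n] _.
rewrite Bsh // big_ord_recl /=.
have T : forall j : 'I_n.+2, hc q n.+2 (bump 0 j) * x ^+ bump 0 j =
   qint q n.+2 / n.+2%:R * (hc q n.+1 j * (qint q 2 * j.+1%:R / qint q j.+1) * x ^+ j.+1)
   - qint q n.+2 / n.+2%:R * (2 / qint q 2) * (hc q n.+1 j.+2 * qint q j.+2 * x ^+ j.+1).
  move=> j; rewrite /bump /= add1n (C1 hq (_ : (j <= n.+1)%N)); last by rewrite -ltnS ltn_ord.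
  ring.
rewrite (eq_bigr _ (fun j _ => T j)) sumrB -!mulr_sumr (C0 hq n) expr0; ring.
Qed.
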